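(* Work in the cube $[-1,1]^d\subset\mathbb{R}^d$ with the dual cells and shifted dual cells defined in the context. Let $z'=(z'_1,\dots,z'_d)$ have exactly $p$ entries equal to $\bullet$, and $z''$ exactly $q$ entries equal to $\bullet$. Let $I=\{i:z'_i=\bullet\}$ and $J=\{j:z''_j=\bullet\}$. Then: 1. If $I\cap J\neq\emptyset$, then $P^\vee_{z'}\cap\tilde P^\vee_{z''}(\epsilon)=\emptyset$ for every $\epsilon>0$. 2. If $I\cap J=\emptyset$ and for some $k$ one has $\{z'_k,z''_k\}=\{+,-\}$, then $\lim_{\epsilon\to0^+}P^\vee_{z'}\cap\tilde P^\vee_{z''}(\epsilon)$ has dimension lower than $d-p-q$. 3. If for some $k$ either ($z'_k=\bullet$ and $z''_k=+$) or ($z'_k=-$ and $z''_k=\bullet$), then $P^\vee_{z'}\cap\tilde P^\vee_{z''}(\epsilon)=\emptyset$ for every $\epsilon>0$. 4. Suppose $z'_k=z''_k$ whenever both lie in $\{+,-\}$. Suppose further that $z''_k=-$ for every $k$ with $z'_k=\bullet$, and $z'_k=+$ for every $k$ with $z''_k=\bullet$. Then $\lim_{\epsilon\to0^+}P^\vee_{z'}\cap\tilde P^\vee_{z''}(\epsilon)=P^\vee_z$, a $(d-p-q)$-dimensional dual cell. Here $z_k=z'_k=z''_k$ when $z'_k=z''_k\in\{+,-\}$, and $z_k=\bullet$ when $z'_k=\bullet$ or $z''_k=\bullet$.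
   Context: For $z\in\{+,-,\bullet\}^d$ with exactly $p$ entries $\bullet$, the dual cell is $$P^\vee_z=\{x\in\mathbb{R}^d: x_i=0 \text{ if } z_i=\bullet,\ x_i\in[0,1]\text{ if }z_i=+,\ x_i\in[-1,0]\text{ if }z_i=-\}.$$ It has dimension $d-p$ and is dual to the $p$-face of $[-1,1]^d$ in which the coordinates with $z_i=\bullet$ vary over $[-1,1]$ and $x_i=z_i$ (read as $\pm1$) otherwise. For $\epsilon>0$ the shifted dual cell is $$\tilde P^\vee_z(\epsilon)=[-1,1]^d\cap\Big\{\epsilon(1,1,\dots,1)+\sum_{i:z_i\neq\bullet}z_it_i\mathbf e_i:\ t_i\ge0\Big\},$$ where $z_i\in\{+,-\}$ is read as $\pm1$ and $\mathbf e_i$ are the standard unit vectors. Limits of sets as $\epsilon\to0^+$ are Hausdorff (Cauchy) limits. *)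

(* Defs.v *)
From HB Require Import structures.
From mathcomp Require Import all_boot all_order all_algebra.
From mathcomp Require Import reals.
Set Implicit Arguments. Unset Strict Implicit. Unset Printing Implicit Defensive.
Import Order.TTheory GRing.Theory Num.Theory.
Local Open Scope ring_scope.

Inductive sign := Plus | Minus | Bullet.

Definition is_bullet (s : sign) : bool :=
  match s with Bullet => true | _ => false end.

Definition sgnR {R : pzRingType} (s : sign) : R :=
  match s with Plus => 1 | Minus => -1 | Bullet => 0 end.

Definition nbullets (d : nat) (z : 'I_d -> sign) : nat :=
  #|[set i | is_bullet (z i)]|.

Definition dual_cell (R : realType) (d : nat) (z : 'I_d -> sign) (x : 'rV[R]_d) : Prop :=
  forall i, match z i with
            | Bullet => x 0 i == 0
            | Plus => 0 <= x 0 i <= 1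
            | Minus => -1 <= x 0 i <= 0
            end.

Definition shifted_dual_cell (R : realType) (d : nat) (z : 'I_d -> sign) (eps : R)
    (x : 'rV[R]_d) : Prop :=
  (forall i, -1 <= x 0 i <= 1) /\
  exists t : 'I_d -> R, (forall i, 0 <= t i) /\
    x = const_mx eps + \sum_(i < d | ~~ is_bullet (z i)) (sgnR (z i) * t i) *: delta_mx 0 i.

(* sup-norm distance (any norm on R^d gives the same Hausdorff convergence) *)
Definition dist (R : realType) (d : nat) (x y : 'rV[R]_d) : R :=
  \big[Num.max/0]_(i < d) `|x 0 i - y 0 i|.

Definition hausdorff_lim0 (R : realType) (d : nat) (S : R -> 'rV[R]_d -> Prop)
    (L : 'rV[R]_d -> Prop) : Prop :=
  forall e : R, 0 < e -> exists delta : R, 0 < delta /\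
    forall eps : R, 0 < eps -> eps < delta ->
      (forall x, S eps x -> exists y, L y /\ dist x y <= e) /\
      (forall y, L y -> exists x, S eps x /\ dist x y <= e).

Definition affdim_ge (R : realType) (d : nat) (S : 'rV[R]_d -> Prop) (n : nat) : Prop :=
  exists x : 'I_n.+1 -> 'rV[R]_d, (forall i, S (x i)) /\
    \rank (\matrix_(i < n) (x (lift ord0 i) - x ord0)) = n.

Definition affdim (R : realType) (d : nat) (S : 'rV[R]_d -> Prop) (k : int) : Prop :=
  (k = -1 /\ forall x, ~ S x) \/
  (exists n : nat, k = n%:Z /\ affdim_ge S n /\ ~ affdim_ge S n.+1).

Definition merge_sign (a b : sign) : sign :=
  match a, b with
  | Bullet, _ => Bullet
  | _, Bullet => Bullet
  | _, _ => a
  end.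

(* Main.v *)
Require Import Defs.
From HB Require Import structures.
From mathcomp Require Import all_boot all_order all_algebra.
From mathcomp Require Import reals lra zify.
Import Order.TTheory GRing.Theory Num.Theory.
Local Open Scope ring_scope.
Lemma shifted_coord (R : realType) (d : nat) (z : 'I_d -> sign) (eps : R) (t : 'I_d -> R) i :
 (const_mx eps + \sum_(j < d | ~~ is_bullet (z j)) (sgnR (z j) * t j) *: delta_mx 0 j : 'rV[R]_d) 0 i
  = eps + (if is_bullet (z i) then 0 else sgnR (z i) * t i).
Proof.
rewrite !mxE summxE.
under eq_bigr => j _ do rewrite !mxE eqxx /=.
case: ifP => hb.
  rewrite big1 ?addr0 // => j hj.
  by case: eqP => [E|_]; [rewrite -E hb in hj | rewrite mulr0].
rewrite (bigD1 i) ?hb //= eqxx mulr1 big1 ?addr0 // => j /andP[_ hj].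
by case: eqP => [E|_]; [rewrite E eqxx in hj | rewrite mulr0].
Qed.

Definition sh {R : realType} (s : sign) (e v : R) : Prop :=
  match s with Bullet => v = e | Plus => e <= v | Minus => v <= e end.

Lemma shifted_iff (R : realType) (d : nat) (z : 'I_d -> sign) (eps : R) x :
  shifted_dual_cell z eps x <->
  (forall i, -1 <= x 0 i <= 1) /\ (forall i, sh (z i) eps (x 0 i)).
Proof.
split.
  move=> [hc [t [ht ex]]]; split => // i.
  rewrite ex shifted_coord; have := ht i.
  by case: (z i) => /= h; lra.
move=> [hc hs]; split => //.
exists (fun i => sgnR (z i) * (x 0 i - eps)); split.
  by move=> i; have := hs i; case: (z i) => /= h; lra.
apply/rowP => i; rewrite shifted_coord.
by have := hs i; case: (z i) => /= h; lra.
Qed.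
Set Implicit Arguments. Unset Strict Implicit.

Definition lo {R : realType} (a b : sign) (e : R) : R :=
  match a, b with
  | Bullet, Minus => 0 | Plus, Bullet => e | Plus, Plus => e | Plus, Minus => 0
  | Minus, Minus => -1 | _, _ => 1 end.
Definition hi {R : realType} (a b : sign) (e : R) : R :=
  match a, b with
  | Bullet, Minus => 0 | Plus, Bullet => e | Plus, Plus => 1 | Plus, Minus => e
  | Minus, Minus => 0 | _, _ => -1 end.

Lemma A_fwd (R : realType) d (z' z'' : 'I_d -> sign) (eps : R) (x : 'rV[R]_d) :
  0 < eps -> dual_cell z' x -> shifted_dual_cell z'' eps x ->
  forall i, lo (z' i) (z'' i) eps <= x 0 i <= hi (z' i) (z'' i) eps.
Proof.
move=> he hd /shifted_iff [hc hs] i.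
have := hd i; have /andP[c1 c2] := hc i; have := hs i.
case: (z' i) (z'' i) => [] [] /= h1 h2; rewrite ?(eqP h2);
  try (case/andP: h2 => h2 h3); apply/andP; split; lra.
Qed.

Lemma A_bwd (R : realType) d (z' z'' : 'I_d -> sign) (eps : R) (x : 'rV[R]_d) :
  0 < eps -> eps <= 1 ->
  (forall i, lo (z' i) (z'' i) eps <= x 0 i <= hi (z' i) (z'' i) eps) ->
  dual_cell z' x /\ shifted_dual_cell z'' eps x.
Proof.
move=> he he1 hb; split.
  move=> i; have /andP[h1 h2] := hb i.
  case: (z' i) (z'' i) h1 h2 => [] [] /= h1 h2; first [apply/andP; split; lra | apply/eqP; lra | lra].
apply/shifted_iff; split => i; have /andP[h1 h2] := hb i.
  case: (z' i) (z'' i) h1 h2 => [] [] /= h1 h2; apply/andP; split; lra.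
case: (z' i) (z'' i) h1 h2 => [] [] /= h1 h2; lra.
Qed.

Lemma lohi_props (R : realType) a b (e : R) : 0 < e -> e <= 1 ->
  (lo a b e <= hi a b e -> lo a b (0:R) <= hi a b (0:R)) /\
  (lo a b (0:R) <= hi a b (0:R) -> lo a b e <= hi a b e) /\
  lo a b (0:R) - e <= lo a b e <= lo a b (0:R) + e /\
  hi a b (0:R) - e <= hi a b e <= hi a b (0:R) + e.
Proof.
by move=> h1 h2; case: a; case: b => /=; (split; [lra|split; [lra|split; apply/andP; split; lra]]).
Qed.

Definition clamp {R : realType} (a b v : R) := if v < a then a else if b < v then b else v.

Lemma clamp_in (R : realType) (a b v : R) : a <= b -> a <= clamp a b v <= b.
Proof.
rewrite /clamp => h; case: ltP => h1; first (apply/andP; split; lra).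
case: ltP => h2; apply/andP; split; lra.
Qed.

Lemma clamp_near (R : realType) (a b a' b' v e : R) : a <= v <= b -> a' <= b' ->
  a - e <= a' <= a + e -> b - e <= b' <= b + e -> `|v - clamp a' b' v| <= e.
Proof.
move=> /andP[h1 h2] h3 /andP[h4 h5] /andP[h6 h7]; rewrite ler_norml /clamp.
case: ltP => h8; first (apply/andP; split; lra).
case: ltP => h9; apply/andP; split; lra.
Qed.

Lemma dist_le (R : realType) d (x y : 'rV[R]_d) e : 0 <= e ->
  (forall i, `|x 0 i - y 0 i| <= e) -> dist x y <= e.
Proof.
move=> he h; rewrite /dist; apply: (big_ind (fun v => v <= e)) => //.
by move=> u v hu hv; rewrite ge_max hu hv.
Qed.

Lemma dist_ge (R : realType) d (x y : 'rV[R]_d) i : `|x 0 i - y 0 i| <= dist x y.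
Proof. by rewrite /dist (bigD1 i) //= le_max lexx. Qed.

Definition L0 {R : realType} {d} (z' z'' : 'I_d -> sign) (y : 'rV[R]_d) : Prop :=
  forall i, lo (z' i) (z'' i) 0 <= y 0 i <= hi (z' i) (z'' i) 0.

Lemma B_lim (R : realType) d (z' z'' : 'I_d -> sign) :
  hausdorff_lim0 (fun (eps : R) (x : 'rV[R]_d) => dual_cell z' x /\ shifted_dual_cell z'' eps x)
    (L0 z' z'').
Proof.
move=> e he; exists (Num.min e 1); split; first by rewrite lt_min he ltr01.
move=> eps he0; rewrite lt_min => /andP[hee he1].
have he1' : eps <= 1 by lra.
split.
  move=> x [hd hs]; have hb := A_fwd he0 hd hs.
  exists (\row_i clamp (lo (z' i) (z'' i) 0) (hi (z' i) (z'' i) 0) (x 0 i)); split.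
    move=> i; rewrite mxE; apply: clamp_in.
    have /andP[u v] := hb i.
    have [P _] := lohi_props (z' i) (z'' i) he0 he1'; apply: P; lra.
  apply: dist_le; first lra.
  move=> i; rewrite mxE.
  have /andP[u v] := hb i.
  have [P [_ [Q1 Q2]]] := lohi_props (z' i) (z'' i) he0 he1'.
  apply: le_trans (_ : eps <= e); last lra.
  apply: (@clamp_near _ (lo (z' i) (z'' i) eps) (hi (z' i) (z'' i) eps)); first by apply/andP.
    apply: P; lra.
  by case/andP: Q1 => q1 q2; apply/andP; split; lra.
  by case/andP: Q2 => q1 q2; apply/andP; split; lra.
move=> y hy.
exists (\row_i clamp (lo (z' i) (z'' i) eps) (hi (z' i) (z'' i) eps) (y 0 i)); split.
  apply: A_bwd => // i; rewrite mxE; apply: clamp_in.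
  have /andP[u v] := hy i.
  have [_ [P _]] := lohi_props (z' i) (z'' i) he0 he1'; apply: P; lra.
apply: dist_le; first lra.
move=> i; rewrite mxE distrC.
have /andP[u v] := hy i.
have [_ [P [Q1 Q2]]] := lohi_props (z' i) (z'' i) he0 he1'.
apply: le_trans (_ : eps <= e); last lra.
apply: (@clamp_near _ (lo (z' i) (z'' i) 0) (hi (z' i) (z'' i) 0)); first by apply/andP.
  apply: P; lra.
by case/andP: Q1 => q1 q2; apply/andP; split; lra.
by case/andP: Q2 => q1 q2; apply/andP; split; lra.
Qed.

Lemma rank_zero_cols (R : realType) n d (M : 'M[R]_(n,d)) (K : {set 'I_d}) :
  (forall r i, i \in K -> M r i = 0) -> (\rank M <= d - #|K|)%N.
Proof.
move=> hM.
pose C := ~: K.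
pose A := \matrix_(r < n, j < #|C|) M r (enum_val j).
pose B := \matrix_(j < #|C|, i < d) ((enum_val j == i)%:R : R).
have -> : M = A *m B.
  apply/matrixP => r i; rewrite !mxE.
  under eq_bigr do rewrite !mxE.
  rewrite -(big_enum_val (A := mem C) (fun x => M r x * (x == i)%:R)).
  case: (boolP (i \in C)) => hi.
    rewrite (bigD1 i) //= eqxx mulr1 big1 ?addr0 // => j /andP[_ hj].
    by rewrite (negbTE hj) mulr0.
  rewrite big1 //.
    by move: hi; rewrite in_setC negbK => /hM ->.
  move=> j hj; case: eqP => [E|_]; last by rewrite mulr0.
  by move: hi; rewrite -E hj.
apply: leq_trans (mulmx_max_rank _ _) _.
by rewrite cardsCs card_ord setCK.
Qed.

Lemma affdim_ge_bound (R : realType) d (S : 'rV[R]_d -> Prop) (K : {set 'I_d}) n :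
  (forall y, S y -> forall i, i \in K -> y 0 i = 0) -> affdim_ge S n -> (n <= d - #|K|)%N.
Proof.
move=> hS [x [hx hr]]; rewrite -{1}hr; apply: rank_zero_cols => r i hi.
by rewrite !mxE (hS _ (hx _) i hi) (hS _ (hx _) i hi) subrr.
Qed.

Lemma sgn_sq (R : realType) (s : sign) : ~~ is_bullet s -> sgnR s * sgnR s = 1 :> R.
Proof. by case: s => //= _; rewrite ?mulrNN mulr1. Qed.

Lemma affdim_ge_cell (R : realType) d (z : 'I_d -> sign) :
  affdim_ge (dual_cell (R:=R) z) #|[set i | ~~ is_bullet (z i)]|.
Proof.
set C := [set i | ~~ is_bullet (z i)].
pose v (j : 'I_#|C|) : 'rV[R]_d := sgnR (z (enum_val j)) *: delta_mx 0 (enum_val j).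
pose x (i : 'I_#|C|.+1) := match unlift ord0 i with None => 0 | Some j => v j end.
have vE (j : 'I_#|C|) k : v j 0 k = sgnR (z (enum_val j)) * (k == enum_val j)%:R.
  by rewrite /v !mxE eqxx /=.
have hC (j : 'I_#|C|) : ~~ is_bullet (z (enum_val j)).
  by have := enum_valP j; rewrite /C inE.
exists x; split.
  move=> i; case: (unliftP ord0 i) => [j ->|->]; rewrite /x ?liftK ?unlift_none.
    move=> k; rewrite vE; case: eqP => [E|_].
      by move: (hC j); rewrite -E mulr1; case: (z k) => //= _; rewrite ?lexx ?ler01 ?lerN10.
    by rewrite mulr0; case: (z k); rewrite ?eqxx ?lexx ?ler01 ?lerN10.
  by move=> k; rewrite mxE; case: (z k); rewrite ?eqxx ?lexx ?ler01 ?lerN10.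
set M := \matrix_(i < #|C|) (x (lift ord0 i) - x ord0).
have ME (j : 'I_#|C|) k : M j k = sgnR (z (enum_val j)) * (k == enum_val j)%:R.
  by rewrite /M /x !mxE liftK unlift_none /= !mxE eqxx /= subr0.
pose N := \matrix_(k < d, j < #|C|) (sgnR (z (enum_val j)) * (k == enum_val j)%:R : R).
have MN : M *m N = 1%:M.
  apply/matrixP => j j'; rewrite !mxE.
  under eq_bigr do rewrite ME mxE.
  rewrite (bigD1 (enum_val j)) //= eqxx mulr1 big1 ?addr0; last first.
    move=> k hk; case: eqP => [E|_]; last by rewrite mulr0 mul0r.
    by move: hk; rewrite E eqxx.
  rewrite (inj_eq enum_val_inj); case: eqP => [<-|_]; last by rewrite !mulr0.
  by rewrite mulr1 sgn_sq.
apply/eqP; rewrite eqn_leq rank_leq_row /=.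
by rewrite -{1}(mxrank1 R #|C|) -MN mxrankM_maxl.
Qed.

Lemma cardIJ d (z' z'' : 'I_d -> sign) :
  (forall k, ~ (z' k = Bullet /\ z'' k = Bullet)) ->
  #|[set i | is_bullet (z' i)] :|: [set i | is_bullet (z'' i)]| = (nbullets z' + nbullets z'')%N.
Proof.
move=> h; rewrite cardsU /nbullets.
suff -> : [set i | is_bullet (z' i)] :&: [set i | is_bullet (z'' i)] = set0 by rewrite cards0 subn0.
apply/setP => i; rewrite !inE.
by case E1: (z' i); case E2: (z'' i) => //=; case: (h i).
Qed.

Lemma small_box (R : realType) a b (eps v : R) :
  (a = Bullet \/ b = Bullet \/ (a = Plus /\ b = Minus) \/ (a = Minus /\ b = Plus)) ->
  0 < eps -> lo a b eps <= v <= hi a b eps -> `|v| <= eps.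
Proof.
move=> H he /andP[u w]; rewrite ler_norml.
by case: a H u w; case: b => /= H u w; try (apply/andP; split; lra);
  exfalso; intuition discriminate.
Qed.

Lemma zero_of_small (R : realType) (v : R) : (forall e, 0 < e -> `|v| <= 2 * e) -> v = 0.
Proof.
move=> H; case: (eqVneq v 0) => // nz.
have hp : 0 < `|v| by rewrite normr_gt0.
have := H (`|v| / 4); lra.
Qed.

Definition dcm {R : realType} (s : sign) (v : R) : bool :=
  match s with Bullet => v == 0 | Plus => 0 <= v <= 1 | Minus => -1 <= v <= 0 end.

Lemma good_combo (R : realType) a b :
  (a <> Bullet -> b <> Bullet -> a = b) -> (a = Bullet -> b = Minus) ->
  (b = Bullet -> a = Plus) -> forall (v : R),
  (lo a b 0 <= v <= hi a b 0) <-> dcm (merge_sign a b) v.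
Proof.
case: a; case: b => /= h1 h2 h3 v;
  try (exfalso; first [ have E := h2 erefl; discriminate E
                      | have E := h3 erefl; discriminate E
                      | have E := h1 ltac:(discriminate) ltac:(discriminate); discriminate E ]);
  (split; [move=> /andP[u w]; first [apply/andP; split; lra | apply/eqP; lra]
         | first [move=> /andP[u w]; apply/andP; split; lra | move=> /eqP ->; apply/andP; split; lra]]).
Qed.
Unset Implicit Arguments. Set Strict Implicit.
Theorem proposition6 (R : realType) (d p q : nat) (z' z'' : 'I_d -> sign)
  (hp : nbullets z' = p) (hq : nbullets z'' = q) :
  let S := fun (eps : R) (x : 'rV[R]_d) =>
             dual_cell z' x /\ shifted_dual_cell z'' eps x in
  (* 1 *)
  ((exists k, z' k = Bullet /\ z'' k = Bullet) ->
     forall eps : R, 0 < eps -> forall x, ~ S eps x) /\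
  (* 2 *)
  ((forall k, ~ (z' k = Bullet /\ z'' k = Bullet)) ->
   (exists k, (z' k = Plus /\ z'' k = Minus) \/ (z' k = Minus /\ z'' k = Plus)) ->
     (exists L, hausdorff_lim0 S L) /\
     (forall L, hausdorff_lim0 S L -> forall k : int, affdim L k ->
        k < d%:Z - p%:Z - q%:Z)) /\
  (* 3 *)
  ((exists k, (z' k = Bullet /\ z'' k = Plus) \/ (z' k = Minus /\ z'' k = Bullet)) ->
     forall eps : R, 0 < eps -> forall x, ~ S eps x) /\
  (* 4 *)
  ((forall k, z' k <> Bullet -> z'' k <> Bullet -> z' k = z'' k) ->
   (forall k, z' k = Bullet -> z'' k = Minus) ->
   (forall k, z'' k = Bullet -> z' k = Plus) ->
     hausdorff_lim0 S (dual_cell (fun k => merge_sign (z' k) (z'' k))) /\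
     affdim (dual_cell (R:=R) (fun k => merge_sign (z' k) (z'' k))) (d%:Z - p%:Z - q%:Z)).
Proof.
move=> S.
set I := [set i | is_bullet (z' i)].
set J := [set i | is_bullet (z'' i)].
split.
  move=> [k [h1 h2]] eps he x [hd hs].
  by have := A_fwd he hd hs k; rewrite h1 h2 /= => /andP[u w]; clear -u w; lra.
split.
  move=> hnb [k hk]; split; first by exists (L0 z' z''); exact: B_lim.
  have hpq : #|I :|: J| = (p + q)%N by rewrite -hp -hq cardIJ.
  move=> L hL m [[-> _]|[n [-> [hge _]]]].
    have : (p + q <= d)%N by rewrite -hpq -[X in (_ <= X)%N]card_ord max_card.
    lia.
  pose K := k |: (I :|: J).
  have kn : k \notin I :|: J.
    by rewrite !inE; case: hk => -[-> ->].
  have cK : #|K| = (p + q).+1 by rewrite cardsU1 kn hpq.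
  have vanish : forall y, L y -> forall i, i \in K -> y 0 i = 0.
    move=> y hy i hi; apply: zero_of_small => e he.
    have [delta [hd hdl]] := hL e he.
    pose eps := Num.min (delta / 2) e.
    have eps0 : 0 < eps by rewrite lt_min he andbT divr_gt0.
    have epsd : eps < delta by rewrite /eps; rewrite gt_min; apply/orP; left; clear -hd; lra.
    have epse : eps <= e by rewrite /eps ge_min lexx orbT.
    have [x [[hd' hs'] hxy]] := (hdl eps eps0 epsd).2 y hy.
    have hb := A_fwd eps0 hd' hs' i.
    have hx : `|x 0 i| <= eps.
      apply: small_box hb => //.
      move: hi; rewrite !inE => /orP[/eqP E|/orP[hI|hJ]].
        by rewrite E; right; right; case: hk => [[-> ->]|[-> ->]]; [left|right].
      by left; move: hI; case: (z' i).
      by right; left; move: hJ; case: (z'' i).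
    have hxy' := le_trans (dist_ge x y i) hxy.
    have := ler_normB (x 0 i) (x 0 i - y 0 i).
    rewrite opprB addrC subrK; clear -hx hxy' epse; lra.
  have := affdim_ge_bound vanish hge; rewrite cK.
  have : (p + q <= d)%N by rewrite -hpq -[X in (_ <= X)%N]card_ord max_card.
  have : ((p + q).+1 <= d)%N by rewrite -cK -[X in (_ <= X)%N]card_ord max_card.
  lia.
split.
  move=> [k hk] eps he x [hd hs].
  have := A_fwd he hd hs k.
  by case: hk => [[-> ->]|[-> ->]] /= /andP[u w]; clear -u w; lra.
move=> h1 h2 h3.
have hnb : forall k, ~ (z' k = Bullet /\ z'' k = Bullet).
  by move=> k [E1 E2]; have := h2 k E1; rewrite E2.
have hpq : #|I :|: J| = (p + q)%N by rewrite -hp -hq cardIJ.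
have eqv : forall y : 'rV[R]_d, L0 z' z'' y <-> dual_cell (fun k => merge_sign (z' k) (z'' k)) y.
  move=> y; split => H i.
    by apply/(good_combo (h1 i) (h2 i) (h3 i)); apply: H.
  by apply/(good_combo (h1 i) (h2 i) (h3 i)); apply: H.
split.
  move=> e he; have [delta [hd H]] := B_lim z' z'' he.
  exists delta; split => // eps h4 h5; have [Ha Hb] := H eps h4 h5; split.
    by move=> x hx; have [y [hy hxy]] := Ha x hx; exists y; split => //; apply/eqv.
  by move=> y /eqv hy; exact: Hb.
right; exists (d - p - q)%N; split.
  have : (p + q <= d)%N by rewrite -hpq -[X in (_ <= X)%N]card_ord max_card.
  lia.
have cC : #|[set i | ~~ is_bullet (merge_sign (z' i) (z'' i))]| = (d - p - q)%N.
  have -> : [set i | ~~ is_bullet (merge_sign (z' i) (z'' i))] = ~: (I :|: J).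
    by apply/setP => i; rewrite !inE; case: (z' i); case: (z'' i).
  have := cardsC (I :|: J); rewrite card_ord hpq.
  lia.
split; first by rewrite -cC; apply: affdim_ge_cell.
move=> /(affdim_ge_bound (K := I :|: J)) H.
have : ((d - p - q).+1 <= d - #|I :|: J|)%N.
  apply: H => y hy i; rewrite !inE => hi.
  have := hy i; rewrite /=.
  by move: hi; case: (z' i); case: (z'' i) => //= _ /eqP.
rewrite hpq.
have : (p + q <= d)%N by rewrite -hpq -[X in (_ <= X)%N]card_ord max_card.
lia.
Qed.
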